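(* Let $(U_n)_{n\in\mathbb N}$ and $(V_n)_{n\in\mathbb N}$ be sequences of real-valued uniformly integrable random variables with $U_n\le V_n$ almost surely for all $n$. Assume $V_n\to V$ in distribution for some random variable $V$. If $\mathbb E[U_n]\to\mathbb E[V]$, then $U_n\to V$ in distribution as $n\to\infty$. *)

(* Defs.v *)
From HB Require Import structures.
From mathcomp Require Import all_boot all_order all_algebra.
From mathcomp Require Import all_classical all_reals all_analysis.
Set Implicit Arguments. Unset Strict Implicit. Unset Printing Implicit Defensive.
Import Order.TTheory GRing.Theory Num.Theory.
Import numFieldNormedType.Exports.
Local Open Scope classical_set_scope.
Local Open Scope ring_scope.

Definition unif_integrable d (T : measurableType d) (R : realType)
    (P : probability T R) (X : nat -> {RV P >-> R}) : Prop :=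
  forall eps : R, 0 < eps -> exists K : R, forall n : nat,
    let A := [set w | K < `|X n w|] in
    (\int[P]_(w in A) (`|X n w|)%:E <= eps%:E)%E.

Definition cvg_in_distribution d (T : measurableType d) d' (T' : measurableType d')
    (R : realType) (P : probability T R) (P' : probability T' R)
    (X : nat -> {RV P >-> R}) (Y : {RV P' >-> R}) : Prop :=
  forall f : R -> R, continuous f -> (exists M : R, forall x, `|f x| <= M) ->
    ((fun n => 'E_P[f \o X n]) @ \oo --> 'E_P'[f \o Y])%E.

(* Main.v *)
Require Import Defs.
From HB Require Import structures.
From mathcomp Require Import all_boot all_order all_algebra.
From mathcomp Require Import all_classical all_reals all_analysis.
From mathcomp Require Import measurable_realfun ring lra.
Import Order.TTheory GRing.Theory Num.Theory.
Import numFieldNormedType.Exports.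
Set Implicit Arguments. Unset Strict Implicit. Unset Printing Implicit Defensive.
Local Open Scope classical_set_scope.
Local Open Scope ring_scope.

Section real_helpers.
Context {R : realType}.

Definition clamp (M x : R) := if x < - M then - M else if M < x then M else x.

Lemma clamp_bd M x : 0 <= M -> `|clamp M x| <= M.
Proof.
move=> M0; rewrite /clamp ler_norml.
case: (ltrP x (-M)) => h1; case: (ltrP M x) => h2; apply/andP; split; lra.
Qed.

Lemma clamp_lip M x y : 0 <= M -> `|clamp M x - clamp M y| <= `|x - y|.
Proof.
move=> M0; have h1 := ler_norm (x - y).
have h2 : -(x - y) <= `|x - y| by rewrite -normrN ler_norm.
rewrite /clamp ler_norml.
case: (ltrP x (-M)) => h3; case: (ltrP M x) => h4;
  case: (ltrP y (-M)) => h5; case: (ltrP M y) => h6; apply/andP; split; lra.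
Qed.

Lemma clamp_id M x : `|x| <= M -> clamp M x = x.
Proof.
rewrite ler_norml => /andP[h1 h2]; rewrite /clamp.
case: (ltrP x (-M)) => h3; [lra|]; case: (ltrP M x) => h4; lra.
Qed.

Lemma clamp_small M x : 0 <= M -> `|x - clamp M x| <= `|x|.
Proof.
move=> M0; have h1 := ler_norm x.
have h2 : - x <= `|x| by rewrite -normrN ler_norm.
rewrite /clamp ler_norml.
case: (ltrP x (-M)) => h3; case: (ltrP M x) => h4; apply/andP; split; lra.
Qed.

Lemma lip_cont (f : R -> R) : (forall x y, `|f x - f y| <= `|x - y|) -> continuous f.
Proof.
move=> H x; apply/cvgrPdist_le => e e0.
have /cvgrPdist_le /(_ e e0) := @cvg_id _ (nbhs x).
apply: filterS => y; apply: le_trans; exact: H.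
Qed.

Lemma clamp_cont M : 0 <= M -> continuous (clamp M).
Proof. by move=> M0; apply: lip_cont => x y; exact: clamp_lip. Qed.

Lemma unif_cont (f : R -> R) : continuous f -> forall e L : R, 0 < e ->
  exists2 δ : R, 0 < δ & forall x y, `|x| <= L -> `|x - y| < δ -> `|f x - f y| <= e.
Proof.
move=> cf e L e0.
have cK := @segment_compact R (-L) L.
have H := (compact_near_coveringP _).1 cK R (0:R)^'+
  (fun δ x => forall y, `|x - y| < δ -> `|f x - f y| <= e) _.
have : \forall δ \near (0:R)^'+, 
  `[-L, L] `<=` (fun x => forall y, `|x - y| < δ -> `|f x - f y| <= e).
  apply: H => x _.
  have /cvgrPdist_lt /(_ (e/2)) := cf x.
  move=> /(_ ltac:(lra)) /nbhs_ballP [η /= η0 Hη].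
  near=> x' δ => y xy; rewrite /= in xy.
  have hx : `|x - x'| < η / 2.
    near: x'; have e2 : 0 < η / 2 by lra.
    by have /cvgrPdist_lt /(_ (η/2) e2) := @cvg_id _ (nbhs x).
  have hd : δ < η / 2 by near: δ; apply: nbhs_right_lt; lra.
  have t1 := ler_distD x' x y.
  have t2 := ler_distD (f x) (f x') (f y).
  have hy : `|f x - f y| < e / 2.
    apply: Hη; rewrite /ball /= (le_lt_trans (ler_distD x' x y))//.
    lra.
  have hy' : `|f x - f x'| < e / 2.
    by apply: Hη; rewrite /ball /=; lra.
  rewrite distrC in hy'; rewrite /=.
  lra.
move=> H1.
have [δ [δ0 Hδ]] := filter_ex (filterI (nbhs_right_gt 0) H1).
exists δ => // x y xL xy; apply: (Hδ x) => //.
by rewrite /= in_itv /= -ler_norml.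
Unshelve. all: by end_near.
Qed.

Lemma pw_bound (f : R -> R) (M L δ e u w : R) : 0 < L -> 0 < δ -> 0 <= e ->
  (forall x, `|f x| <= M) ->
  (forall x y, `|x| <= L -> `|x - y| < δ -> `|f x - f y| <= e) ->
  `|f u - f w| <= e + (2 * M / L) * `|w| + (2 * M / δ) * `|w - u|.
Proof.
move=> L0 d0 e0 fM H.
have M0 : 0 <= M := le_trans (normr_ge0 _) (fM 0).
have fuw : `|f u - f w| <= 2 * M.
  by rewrite (le_trans (ler_normB _ _))//; have := fM u; have := fM w; lra.
have a0 : 0 <= 2 * M / L * `|w|.
  by rewrite mulr_ge0// divr_ge0// ?mulr_ge0// ltW.
have b0 : 0 <= 2 * M / δ * `|w - u|.
  by rewrite mulr_ge0// divr_ge0// ?mulr_ge0// ltW.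
case: (lerP `|w| L) => hw; [case: (ltrP `|w - u| δ) => hd|].
- by have := H w u hw hd; rewrite distrC; lra.
- have : 2 * M <= 2 * M / δ * `|w - u|.
    have q0 : 0 <= 2 * M / δ by rewrite divr_ge0// ?mulr_ge0// ltW.
    have := ler_wpM2l q0 hd.
    by rewrite divfK// gt_eqF.
  lra.
- have : 2 * M <= 2 * M / L * `|w|.
    have q0 : 0 <= 2 * M / L by rewrite divr_ge0// ?mulr_ge0// ltW.
    have := ler_wpM2l q0 (ltW hw).
    by rewrite divfK// gt_eqF.
  lra.
Qed.

End real_helpers.

Section helpers.
Context d (T : measurableType d) (R : realType) (P : probability T R).

Definition intg (X : T -> R) := P.-integrable setT (EFin \o X).

Lemma intg_le (X Y : T -> R) : measurable_fun setT Y ->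
  (forall x, `|Y x| <= `|X x|) -> intg X -> intg Y.
Proof.
move=> mY YX iX; apply: (le_integrable measurableT _ _ iX).
  exact/measurable_EFinP.
by move=> x _ /=; rewrite lee_fin.
Qed.

Lemma intg_cst (k : R) : intg (cst k).
Proof. exact: finite_measure_integrable_cst. Qed.

Lemma intg_bdd (X : T -> R) (M : R) : measurable_fun setT X ->
  (forall x, `|X x| <= M) -> intg X.
Proof.
move=> mX XM; apply: (@intg_le (cst M)) => // [x|]; last exact: intg_cst.
by rewrite /= (le_trans (XM x))// ler_norm.
Qed.

Lemma intg_meas X : intg X -> measurable_fun setT X.
Proof. by move=> /integrableP[/measurable_EFinP]. Qed.

Lemma intgD X Y : intg X -> intg Y -> intg (fun x => X x + Y x).
Proof.
move=> iX iY; apply: (eq_integrable measurableT _ _ _ (integrableD measurableT iX iY)).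
by move=> x _.
Qed.

Lemma intgB X Y : intg X -> intg Y -> intg (fun x => X x - Y x).
Proof.
move=> iX iY; apply: (eq_integrable measurableT _ _ _ (integrableB measurableT iX iY)).
by move=> x _.
Qed.

Lemma intgZ k X : intg X -> intg (fun x => k * X x).
Proof.
move=> iX; apply: (eq_integrable measurableT _ _ _ (integrableZl measurableT k iX)).
by move=> x _.
Qed.

Lemma intg_abs X : intg X -> intg (fun x => `|X x|).
Proof.
move=> iX; apply: (@intg_le X) => // [|x]; last by rewrite normr_id.
apply: measurableT_comp => //; exact: intg_meas.
Qed.

Lemma intgE X : intg X -> (\int[P]_x (X x)%:E)%E = (\int[P]_x X x)%:E.
Proof. by move=> iX; rewrite fineK// integrable_fin_num. Qed.

Lemma Rint_cst k : \int[P]_x (cst k x) = k.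
Proof. by rewrite /= Rintegral_cst//= probability_setT mulr1. Qed.

Lemma Rint_abs_ge0 (X : T -> R) : 0 <= \int[P]_x `|X x|.
Proof. by apply: Rintegral_ge0 => x _. Qed.

Lemma fin_intg (X : T -> R) : measurable_fun setT X ->
  (\int[P]_x (X x)%:E)%E \is a fin_num -> intg X.
Proof.
move=> mX hfin; apply/integrableP; split; first exact/measurable_EFinP.
have mE : measurable_fun setT (EFin \o X) by exact/measurable_EFinP.
rewrite (_ : (fun x => `|(EFin \o X) x|)%E = ((EFin \o X)^\+ \+ (EFin \o X)^\-)%E);
  last by rewrite -fune_abse.
rewrite ge0_integralD//; last 2 first.
  exact: measurable_funepos. exact: measurable_funeneg.
rewrite integralE in hfin.
move: hfin (@integral_ge0 _ _ _ P setT ((EFin \o X)^\+)%E (fun x _ => funepos_ge0 _ x))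
  (@integral_ge0 _ _ _ P setT ((EFin \o X)^\-)%E (fun x _ => funeneg_ge0 _ x)).
move: (\int[P]_x ((EFin \o X)^\+ x))%E (\int[P]_x ((EFin \o X)^\- x))%E => A B.
by case: A => [a| |]; case: B => [b| |] //= _ _ _; rewrite ltry.
Qed.


Lemma meas_gt (X : T -> R) (K : R) : measurable_fun setT X ->
  measurable [set w | K < `|X w|].
Proof.
move=> mX.
have mN : measurable_fun setT (fun w => `|X w|) by apply: measurableT_comp.
have := mN measurableT _ (measurable_itv `]K, +oo[).
rewrite setTI; congr measurable; apply/seteqP; split => w /=; rewrite in_itv/= andbT//.
Qed.

Lemma UI_int (X : T -> R) (K e : R) : measurable_fun setT X ->
  (\int[P]_(w in [set w | (K < `|X w|)%R]) (`|X w|)%:E <= e%:E)%E ->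
  intg X /\ \int[P]_x `|X x| <= `|K| + e.
Proof.
move=> mX hUI.
set A := [set w | K < `|X w|].
have mA : measurable A by exact: meas_gt.
have mN : measurable_fun setT (fun w => `|X w|) by apply: measurableT_comp.
have mNE : measurable_fun setT (fun w => (`|X w|)%:E) by exact/measurable_EFinP.
have mR : measurable_fun setT ((fun w => (`|X w|)%:E) \_ A).
  apply/(@measurable_restrict _ _ _ _ A setT _ mA measurableT).1.
  exact: measurable_funS mNE.
have key : (\int[P]_x (`|X x|)%:E <= (`|K| + e)%:E)%E.
  apply: (@le_trans _ _ (\int[P]_x ((cst (`|K|%:E)) x + ((fun w => `|X w|%:E) \_ A) x))%E).
    apply: ge0_le_integral => //.
      by apply: emeasurable_funD => //; exact: measurable_cst.
    move=> x _ /=; rewrite /patch; case: ifPn => xA.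
      by rewrite leeDr.
    rewrite adde0 lee_fin; move: xA; rewrite notin_setE /A /= => /negP; rewrite -leNgt => xK.
    by rewrite (le_trans xK)// ler_norm.
  rewrite ge0_integralD//; [|by move=> x _ /=|by move=> x _; rewrite /patch; case: ifPn].
  rewrite integral_cst//= probability_setT mule1 -integral_mkcond EFinD.
  by rewrite leeD2l.
have iX : intg X.
  apply/integrableP; split; first exact/measurable_EFinP.
  by apply: le_lt_trans key _; rewrite ltry.
split => //.
have := key; rewrite (intgE (intg_abs iX)) lee_fin.
by [].
Qed.


Lemma Rint_dist (X Y : T -> R) : intg X -> intg Y ->
  `|\int[P]_x X x - \int[P]_x Y x| <= \int[P]_x `|X x - Y x|.
Proof.
move=> iX iY; rewrite -RintegralB//.
exact: le_normr_Rintegral (intgB iX iY).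
Qed.

Lemma UI_clamp (X : T -> R) (K e M : R) : measurable_fun setT X -> `|K| <= M ->
  (\int[P]_(w in [set w | (K < `|X w|)%R]) (`|X w|)%:E <= e%:E)%E ->
  \int[P]_x `|X x - clamp M (X x)| <= e.
Proof.
move=> mX KM hUI.
have M0 : 0 <= M by apply: le_trans KM.
set A := [set w | K < `|X w|].
have mA : measurable A by exact: meas_gt.
have mNE : measurable_fun setT (fun w => (`|X w|)%:E).
  by apply/measurable_EFinP; apply: measurableT_comp.
have mR : measurable_fun setT ((fun w => (`|X w|)%:E) \_ A).
  apply/(@measurable_restrict _ _ _ _ A setT _ mA measurableT).1.
  exact: measurable_funS mNE.
have mC : measurable_fun setT (fun x => `|X x - clamp M (X x)|).
  apply: measurableT_comp => //; apply: measurable_funB => //.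
  apply: measurableT_comp => //; exact: continuous_measurable_fun (clamp_cont M0).
have key : (\int[P]_x (`|X x - clamp M (X x)|)%:E <= e%:E)%E.
  apply: le_trans hUI; rewrite (integral_mkcond A).
  apply: ge0_le_integral => //.
  - by apply/measurable_EFinP.
  move=> x _ /=; rewrite /patch; case: ifPn => xA.
    by rewrite lee_fin clamp_small.
  move: xA; rewrite notin_setE /A /= => /negP; rewrite -leNgt => xK.
  rewrite clamp_id ?subrr ?normr0//.
  by rewrite (le_trans xK)// (le_trans _ KM)// ler_norm.
have k0 : (0 <= \int[P]_x (`|X x - clamp M (X x)|)%:E)%E by apply: integral_ge0.
rewrite /Rintegral; move: key k0.
by case: (\int[P]_x _)%E.
Qed.


Lemma tail_cvg (X : T -> R) : intg X ->
  (fun k : nat => \int[P]_x `|X x - clamp k%:R (X x)|) @ \oo --> 0.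
Proof.
move=> iX; have mX := intg_meas iX.
have mc (k : nat) : measurable_fun setT (fun x => clamp k%:R (X x)).
  apply: measurableT_comp => //; exact: continuous_measurable_fun (clamp_cont (ler0n _ k)).
have m1 (k : nat) : measurable_fun setT (fun x => (X x - clamp k%:R (X x))%:E).
  by apply/measurable_EFinP; exact: measurable_funB.
have h1 : \forall x \ae P, setT x ->
    (fun k : nat => (X x - clamp k%:R (X x))%:E) @ \oo --> (cst 0%E x).
  apply: aeW => x _; apply: cvg_near_cst; near=> k; rewrite clamp_id ?subrr//.
  near: k; exact: nbhs_infty_ger.
have h2 : \forall x \ae P, forall k : nat, setT x ->
    (`|(X x - clamp k%:R (X x))%:E| <= (EFin \o (fun x => `|X x|%R)) x)%E.
  by apply: aeW => x k _; rewrite /= lee_fin; exact: clamp_small.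
have [_ h _] := @dominated_convergence _ _ _ P setT measurableT
  (fun k x => (X x - clamp k%:R (X x))%:E) (cst 0%E) (EFin \o (fun x => `|X x|%R))
  m1 (measurable_cst _) h1 (intg_abs iX) h2.
move/fine_cvg: h; apply: cvg_trans; apply: near_eq_cvg; apply: nearW => k /=.
rewrite /Rintegral; congr fine; apply: eq_integral => x _.
by rewrite /= subr0.
Unshelve. all: by end_near.
Qed.

End helpers.

Unset Implicit Arguments.
Set Strict Implicit.

Theorem lemma3p5 (d : measure_display) (T : measurableType d)
    (d' : measure_display) (T' : measurableType d') (R : realType)
    (P : probability T R) (P' : probability T' R)
    (U W : nat -> {RV P >-> R}) (V : {RV P' >-> R}) :
  unif_integrable U -> unif_integrable W ->
  (forall n, {ae P, forall x, U n x <= W n x}) ->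
  cvg_in_distribution W V ->
  ((fun n => 'E_P[U n]) @ \oo --> 'E_P'[V])%E ->
  cvg_in_distribution U V.
Proof.
move=> UIU UIW hUW hW hEU.
have mU n : measurable_fun setT (U n) := measurable_funPT (U n).
have mW n : measurable_fun setT (W n) := measurable_funPT (W n).
have mV : measurable_fun setT V := measurable_funPT V.
have [CU [CU0 hCU]] : exists C : R, 0 <= C /\
    forall n, intg P (U n) /\ \int[P]_x `|U n x| <= C.
  have [K hK] := UIU 1 ltr01.
  exists (`|K| + 1); split; first by rewrite addr_ge0.
  by move=> n; exact: (UI_int (mU n) (hK n)).
have [CW [CW0 hCW]] : exists C : R, 0 <= C /\
    forall n, intg P (W n) /\ \int[P]_x `|W n x| <= C.
  have [K hK] := UIW 1 ltr01.
  exists (`|K| + 1); split; first by rewrite addr_ge0.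
  by move=> n; exact: (UI_int (mW n) (hK n)).
have iU n := (hCU n).1.
have iW n := (hCW n).1.
have eU n : ('E_P[U n] = (\int[P]_x U n x)%:E)%E by rewrite expectation_def intgE.
have finV : ('E_P'[V])%E \is a fin_num.
  have bU n : `|\int[P]_x U n x| <= CU.
    exact: le_trans (le_normr_Rintegral measurableT (iU n)) (hCU n).2.
  move: hEU; case: ('E_P'[V])%E => [v| |] // h.
  - have /cvgeyPge /(_ (CU + 1)) /filter_ex [n] := h.
    rewrite eU lee_fin; have := bU n; rewrite ler_norml => /andP[_ ?]; lra.
  - have /cvgeNyPle /(_ (- (CU + 1))) /filter_ex [n] := h.
    rewrite eU lee_fin; have := bU n; rewrite ler_norml => /andP[? _]; lra.
have iV : intg P' V by apply: fin_intg => //; rewrite -expectation_def.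
set EV := \int[P']_x V x.
have eV : ('E_P'[V] = EV%:E)%E by rewrite expectation_def intgE.
have hEUR : (fun n => \int[P]_x U n x) @ \oo --> EV.
  move: hEU; rewrite eV (_ : (fun n => 'E_P[U n])%E = fun n => (\int[P]_x U n x)%:E).
    by move/fine_cvg.
  by apply/funext => n; rewrite eU.
have ifX (d0 : measure_display) (T0 : measurableType d0) (Q : probability T0 R) (f : R -> R) (M : R) (X : T0 -> R) :
    continuous f -> (forall x, `|f x| <= M) -> measurable_fun setT X ->
    intg Q (fun x => f (X x)).
  move=> cf fM mX; apply: (@intg_bdd _ _ _ Q (fun x => f (X x)) M); last by move=> x; exact: fM.
  apply: measurableT_comp => //; exact: continuous_measurable_fun.
have hWR (f : R -> R) (M : R) : continuous f -> (forall x, `|f x| <= M) ->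
   (fun n => \int[P]_x f (W n x)) @ \oo --> \int[P']_x f (V x).
  move=> cf fM; have := hW f cf (ex_intro _ M fM).
  rewrite unlock /= (intgE (ifX _ _ _ _ _ _ cf fM mV)).
  rewrite (_ : (fun n => _) = fun n => (\int[P]_x f (W n x))%:E).
    by move/fine_cvg.
  by apply/funext => n; rewrite (intgE (ifX _ _ _ _ _ _ cf fM (mW n))).
have cl (M : R) : 0 <= M -> continuous (clamp M) /\ forall x, `|clamp M x| <= M.
  by move=> M0; split; [exact: clamp_cont|move=> x; exact: clamp_bd].
have hEW : (fun n => \int[P]_x W n x) @ \oo --> EV.
  apply/cvgrPdist_le => eps eps0.
  pose e := eps / 3; have e0 : 0 < e by rewrite divr_gt0.
  have [K hK] := UIW e e0.
  have /cvgrPdist_le /(_ e e0) H1 := tail_cvg iV.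
  have H2 := nbhs_infty_ger `|K|.
  have [k [hk1 hk2]] := filter_ex (filterI H1 H2).
  pose M : R := k%:R.
  have M0 : 0 <= M := ler0n _ _.
  have [ccl bcl] := cl M M0.
  have /cvgrPdist_le /(_ e e0) := hWR (clamp M) M ccl bcl.
  apply: filterS => n hn.
  have a1 := UI_clamp (mW n) hk2 (hK n).
  have a1' := Rint_dist (iW n) (ifX _ _ _ _ _ _ ccl bcl (mW n)).
  have a2 := Rint_dist iV (ifX _ _ _ _ _ _ ccl bcl mV).
  rewrite /= sub0r normrN in hk1.
  have t1 := ler_distD (\int[P']_x clamp M (V x)) EV (\int[P]_x W n x).
  have t2 := ler_distD (\int[P]_x clamp M (W n x)) (\int[P']_x clamp M (V x)) (\int[P]_x W n x).
  have t3 := distrC (\int[P]_x clamp M (W n x)) (\int[P]_x W n x).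
  rewrite ger0_norm ?Rint_abs_ge0 // -/M in hk1.
  rewrite -/EV in a2.
  rewrite /e in a1 a2 hn hk1; lra.
have hD : (fun n => \int[P]_x `|W n x - U n x|) @ \oo --> 0.
  have -> : (fun n => \int[P]_x `|W n x - U n x|) =
      (fun n => \int[P]_x W n x - \int[P]_x U n x).
    apply/funext => n; rewrite -RintegralB; [|by []|exact: iW|exact: iU].
    rewrite /Rintegral; congr fine.
    apply: ae_eq_integral => //.
    - apply/measurable_EFinP; apply: measurableT_comp => //.
      exact: measurable_funB.
    - by apply/measurable_EFinP; exact: measurable_funB.
    - apply: filterS (hUW n) => x hx _ /=.
      by rewrite ger0_norm // subr_ge0.
  rewrite -(subrr EV); exact: cvgB hEW hEUR.
move=> f cf [M fM].
have M0 : 0 <= M := le_trans (normr_ge0 _) (fM 0).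
have ifU n := ifX _ _ P _ _ _ cf fM (mU n).
have ifW n := ifX _ _ P _ _ _ cf fM (mW n).
have hC : (fun n => \int[P]_x f (U n x) - \int[P]_x f (W n x)) @ \oo --> 0.
  apply/cvgrPdist_le => eps eps0.
  have [e [e0 ee]] : exists e : R, 0 < e /\ 3 * e = eps.
    by exists (eps / 3); split; [rewrite divr_gt0|field].
  pose L := (2 * M * CW + e) / e.
  have L0 : 0 < L by rewrite /L divr_gt0// ltr_wpDl// !mulr_ge0.
  have [δ δ0 hδ] := unif_cont cf L e0.
  pose r := e * δ / (2 * M + 1).
  have r0 : 0 < r by rewrite /r !divr_gt0 ?mulr_gt0// ltr_wpDl// mulr_ge0.
  have /cvgrPdist_le /(_ r r0) := hD.
  apply: filterS => n hn; rewrite /= sub0r normrN ger0_norm ?Rint_abs_ge0// in hn.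
  rewrite /= sub0r normrN.
  apply: (le_trans (Rint_dist (ifU n) (ifW n))).
  have iWn := intg_abs (iW n).
  have iD := intg_abs (intgB (iW n) (iU n)).
  apply: (le_trans (le_Rintegral measurableT _ _
    (fun x _ => pw_bound (U n x) (W n x) L0 δ0 (ltW e0) fM hδ))).
  - exact: intg_abs (intgB (ifU n) (ifW n)).
  - exact: intgD (intgD (intg_cst _ _) (intgZ _ iWn)) (intgZ _ iD).
  rewrite RintegralD//; last 2 first.
    exact: intgD (intg_cst _ _) (intgZ _ iWn).
    exact: intgZ _ iD.
  rewrite RintegralD//; last 2 first.
    exact: intg_cst.
    exact: intgZ _ iWn.
  rewrite RintegralZl// RintegralZl// (Rint_cst _ e).
  have b1 : 2 * M / L * \int[P]_x `|W n x| <= e.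
    have q0 : 0 <= 2 * M / L.
      apply: divr_ge0; [apply: mulr_ge0 => //|exact: ltW].
    apply: (le_trans (ler_wpM2l q0 (hCW n).2)).
    have eL : e * L = 2 * M * CW + e.
      by rewrite /L mulrC divfK //; apply: lt0r_neq0.
    rewrite -(ler_pM2r L0) eL.
    have -> : 2 * M / L * CW * L = 2 * M * CW.
      by field; apply: lt0r_neq0.
    lra.
  have b2 : 2 * M / δ * \int[P]_x `|W n x - U n x| <= e.
    have q1 : 0 <= 2 * M / δ by rewrite divr_ge0 ?mulr_ge0 ?(ltW δ0).
    apply: (le_trans (ler_wpM2l q1 hn)).
    have -> : 2 * M / δ * r = 2 * M * e / (2 * M + 1).
      rewrite /r; field; apply/andP; split; apply: lt0r_neq0 => //; lra.
    rewrite ler_pdivrMr; last by rewrite ltr_wpDl ?mulr_ge0.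
    have -> : e * (2 * M + 1) = 2 * M * e + e by ring.
    lra.
  lra.
rewrite unlock.
rewrite (intgE (ifX _ _ P' _ _ _ cf fM mV)).
rewrite (_ : (fun n => \int[P]_w ((f \o U n) w)%:E)%E =
    fun n => (\int[P]_x f (U n x))%:E); last first.
  by apply/funext => n; rewrite (intgE (ifU n)).
apply: cvg_EFin; first by apply: nearW.
suff -> : (fine \o (fun n => (\int[P]_x f (U n x))%:E)) =
    ((fun n => \int[P]_x f (U n x) - \int[P]_x f (W n x)) +
     (fun n => \int[P]_x f (W n x))).
  by rewrite -[X in _ --> X]add0r; exact: cvgD hC (hWR f M cf fM).
by apply/funext => n /=; rewrite subrK.
Qed.
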